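(* Let $X$, $Y$, $Z$ be random variables with values in $\mathcal{X}$, $\mathcal{Y}$, $\mathcal{Z}$ and joint distribution $P_{X,Y,Z}$. Then $$\mathrm{Weak\text{-}MI}(X;Y|Z)\le \mathrm{MI}(X;Y|Z).$$
   Context: $D_{\mathrm{KL}}$ denotes the Kullback–Leibler divergence. $\mathbb{E}_{P_Z}[P_{X|Z}P_{Y|Z}]$ denotes the mixture measure on $\mathcal{X}\times\mathcal{Y}$ given by $\int P_{X|Z=z}\otimes P_{Y|Z=z}\,dP_Z(z)$, where $P_{X|Z=z}$, $P_{Y|Z=z}$ are conditional distributions and $P_Z$ is the marginal of $Z$. The weak-conditional mutual information is $\mathrm{Weak\text{-}MI}(X;Y|Z):=D_{\mathrm{KL}}\big(P_{X,Y}\,\|\,\mathbb{E}_{P_Z}[P_{X|Z}P_{Y|Z}]\big)$, and the conditional mutual information is $\mathrm{MI}(X;Y|Z):=\mathbb{E}_{z\sim P_Z}\big[D_{\mathrm{KL}}(P_{X,Y|Z=z}\,\|\,P_{X|Z=z}P_{Y|Z=z})\big]$. *)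

(* Defs.v *)
From HB Require Import structures.
From mathcomp Require Import all_boot all_order all_algebra.
From mathcomp Require Import all_classical all_reals all_analysis.
From mathcomp Require Import measurable_realfun.
Set Implicit Arguments. Unset Strict Implicit. Unset Printing Implicit Defensive.
Import Order.TTheory GRing.Theory Num.Theory.
Local Open Scope classical_set_scope.
Local Open Scope ring_scope.
Local Open Scope ereal_scope.

Section KL.
Context d (T : measurableType d) (R : realType).

Definition is_density (P Q : set T -> \bar R) (f : T -> R) : Prop :=
  [/\ measurable_fun setT f, (forall x, (0 <= f x)%R) &
      forall A, measurable A -> P A = \int[Q]_(x in A) (f x)%:E].

(* Kullback-Leibler divergence: D(P||Q) = \int log (dP/dQ) dP if P << Q
   (i.e. a density dP/dQ exists), and +oo otherwise. *)
Definition KL (P Q : set T -> \bar R) : \bar R :=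
  match pselect (exists f, is_density P Q f) with
  | left h => \int[P]_x (ln (projT1 (cid h) x))%:E
  | right _ => +oo
  end.
End KL.

Section MI.
Context dX dY dZ (X : measurableType dX) (Y : measurableType dY)
  (Z : measurableType dZ) (R : realType).

(* joint law P_{X,Y,Z} on (X * Y) * Z, and a version K of the conditional
   distribution P_{X,Y | Z} (a probability kernel from Z to X * Y) *)
Variables (P : set ((X * Y) * Z) -> \bar R) (K : Z -> {measure set (X * Y) -> \bar R}).

Definition PXY : set (X * Y) -> \bar R := pushforward P fst.
Definition PZ : set Z -> \bar R := pushforward P snd.
Definition PX_Z (z : Z) : set X -> \bar R := pushforward (K z) fst.
Definition PY_Z (z : Z) : set Y -> \bar R := pushforward (K z) snd.

Definition mixture : set (X * Y) -> \bar R :=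
  fun A => \int[PZ]_z ((PX_Z z \x PY_Z z) A).

Definition weak_MI : \bar R := KL PXY mixture.

Definition cond_KL (z : Z) : \bar R := KL (K z) (PX_Z z \x PY_Z z).

Definition cond_MI : \bar R := \int[PZ]_z cond_KL z.

Definition is_cond_distr : Prop :=
  forall A, measurable A -> P A = \int[PZ]_z K z (ysection A z).
End MI.

(* Main.v *)
Require Import Defs.
From HB Require Import structures.
From mathcomp Require Import all_boot all_order all_algebra.
From mathcomp Require Import all_classical all_reals all_analysis.
From mathcomp Require Import measurable_realfun.
From mathcomp Require Import lra.
Set Implicit Arguments. Unset Strict Implicit. Unset Printing Implicit Defensive.
Import Order.TTheory GRing.Theory Num.Theory.
Local Open Scope ring_scope.

Section real_ineq.
Context (R : realType).

Lemma ln_le_sub1 (x : R) : 0 < x -> ln x <= x - 1.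
Proof.
move=> x0; have := @le_ln1Dx R (x - 1).
rewrite (addrC 1 (x - 1)) subrK; apply; lra.
Qed.

Lemma gibbs_pt (a b : R) : 0 < a -> 0 < b ->
  Num.max (ln a) 0 + Num.max (- ln b) 0 + 1 <=
  Num.max (- ln a) 0 + Num.max (ln b) 0 + a * expR (- ln b).
Proof.
move=> a0 b0.
have e : a * expR (- ln b) = a / b by rewrite expRN lnK// posrE.
have h : ln a - ln b <= a / b - 1.
  rewrite -lnV ?posrE// -lnM ?posrE ?invr_gt0//; apply: ln_le_sub1.
  by rewrite divr_gt0.
rewrite e.
have hm (x : R) : Num.max x 0 = x + Num.max (- x) 0.
  case: (boolP (0 <= x)) => hx.
    by rewrite (max_l hx) (max_r (_ : - x <= 0)) ?oppr_le0// addr0.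
  have hx' : x <= 0 by rewrite leNgt; apply/negP => /ltW; rewrite (negbTE hx).
  rewrite (max_r hx') (max_l (_ : 0 <= - x)) ?oppr_ge0//.
  by rewrite subrr.
rewrite (hm (ln a)) (hm (- ln b)) opprK.
have : 0 <= Num.max (ln a) 0 by rewrite le_max lexx orbT.
have : 0 <= Num.max (- ln b) 0 by rewrite le_max lexx orbT.
lra.
Qed.

Lemma neg_ln_bound (b : R) : 0 <= b -> b * Num.max (- ln b) 0 <= 1.
Proof.
move=> b0; case: (leP 1 b) => b1.
  by rewrite (max_idPr _) ?mulr0// oppr_le0 ln_ge0.
have [->|bp] := eqVneq b 0; first by rewrite mul0r.
have bpos : 0 < b by rewrite lt_def bp b0.
have lnn : ln b < 0 by apply: ln_lt0; rewrite bpos.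
rewrite (max_idPl _); last by rewrite oppr_ge0 ltW.
have h := @ln_le_sub1 b^-1 (ltac:(by rewrite invr_gt0)).
rewrite lnV ?posrE// in h.
have : b * (- ln b) <= b * (b^-1 - 1) by rewrite ler_pM2l.
rewrite mulrBr mulfV ?gt_eqF// mulr1; lra.
Qed.
End real_ineq.

Local Open Scope classical_set_scope.
Local Open Scope ereal_scope.

Section disint.
Context d d' (Z : measurableType d) (W : measurableType d') (R : realType).
Variables (mu : {measure set Z -> \bar R}) (k : Z -> {measure set W -> \bar R})
  (nu : {measure set W -> \bar R}).
Hypothesis mk : forall U, measurable U -> measurable_fun setT (k ^~ U).
Hypothesis hnu : forall U, measurable U -> nu U = \int[mu]_z k z U.

Let disint_indic E (mE : measurable E) :
  \int[nu]_w (\1_E w)%:E = \int[mu]_z (\int[k z]_w (\1_E w)%:E).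
Proof.
rewrite integral_indic// setIT hnu//.
by apply: eq_integral => y _; rewrite integral_indic// setIT.
Qed.

Import HBNNSimple.

Let disint_nnsfun (f : {nnsfun W >-> R}) :
  \int[nu]_z (f z)%:E = \int[mu]_y (\int[k y]_z (f z)%:E).
Proof.
under [in LHS]eq_integral do rewrite fimfunE -fsumEFin//.
rewrite ge0_integral_fsum//; last 2 first.
  - by move=> r; exact/measurable_EFinP/measurableT_comp.
  - by move=> r z _; rewrite EFinM nnfun_muleindic_ge0.
under [in RHS]eq_integral.
  move=> y _.
  under eq_integral.
    by move=> z _; rewrite fimfunE -fsumEFin//; over.
  rewrite /= ge0_integral_fsum//; last 2 first.
    - by move=> r; exact/measurable_EFinP/measurableT_comp.
    - by move=> r z _; rewrite EFinM nnfun_muleindic_ge0.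
  under eq_fsbigr.
    move=> r _.
    rewrite (integralZl_indic _ (fun r => f @^-1` [set r]))//; last first.
      by move=> r0; rewrite preimage_nnfun0.
    rewrite integral_indic// setIT.
    over.
  over.
rewrite /= ge0_integral_fsum//; last 2 first.
  - move=> r; apply: measurable_funeM.
    idtac.
    by apply: mk; exact: measurable_sfunP.
  - move=> n y _.
    have := mulemu_ge0 (fun n => f @^-1` [set n]).
    by apply; exact: preimage_nnfun0.
apply: eq_fsbigr => r _.
rewrite (integralZl_indic _ (fun r => f @^-1` [set r]))//; last first.
  exact: preimage_nnfun0.
rewrite /= disint_indic//.
have [r0|r0] := leP 0%R r.
  rewrite ge0_integralZl//.
    by under eq_integral do rewrite integral_indic// setIT.
  by apply: mk; exact: measurable_sfunP.
rewrite integral0_eq ?mule0.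
  by rewrite integral0_eq// => y _; rewrite preimage_nnfun0// measure0 mule0.
by move=> y _; rewrite integral0_eq// => z _; rewrite preimage_nnfun0// indic0.
Qed.

Lemma disint f : (forall z, 0 <= f z) -> measurable_fun [set: W] f ->
  \int[nu]_z f z = \int[mu]_y (\int[k y]_z f z).
Proof.
move=> f0 mf.
pose f_ := nnsfun_approx measurableT mf.
transitivity (\int[nu]_z (lim ((f_ n z)%:E @[n --> \oo]))).
  by apply/eq_integral => z _; apply/esym/cvg_lim => //=; exact: cvg_nnsfun_approx.
rewrite monotone_convergence//; last 3 first.
  by move=> n; exact/measurable_EFinP.
  by move=> n z _; rewrite lee_fin.
  by move=> z _ a b ab; rewrite lee_fin; exact/lefP/nd_nnsfun_approx.
rewrite (_ : (fun _ => _) =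
    (fun n => \int[mu]_y (\int[k y]_z (f_ n z)%:E)))//; last first.
  by apply/funext => n; rewrite disint_nnsfun.
transitivity (\int[mu]_y lim ((\int[k y]_z (f_ n z)%:E) @[n --> \oo])).
  rewrite -monotone_convergence//; last 3 first.
  - move=> n; apply: measurable_fun_integral_kernel => //.
    + by move=> z; rewrite lee_fin.
    + exact/measurable_EFinP.
  - by move=> n y _; apply: integral_ge0 => // z _; rewrite lee_fin.
  - move=> y _ a b ab; apply: ge0_le_integral => //.
    + by move=> z _; rewrite lee_fin.
    + exact/measurable_EFinP.
    + exact/measurable_EFinP.
    + by move=> z _; rewrite lee_fin; exact/lefP/nd_nnsfun_approx.
apply: eq_integral => y _; rewrite -monotone_convergence//; last 3 first.
  - by move=> n; exact/measurable_EFinP.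
  - by move=> n z _; rewrite lee_fin.
  - by move=> z _ a b ab; rewrite lee_fin; exact/lefP/nd_nnsfun_approx.
by apply: eq_integral => z _; apply/cvg_lim => //; exact: cvg_nnsfun_approx.
Qed.

End disint.

Section change_density.
Context d (T : measurableType d) (R : realType).
Variables (P Q : {measure set T -> \bar R}) (g : T -> R).
Hypothesis hg : is_density P Q g.

Lemma change_density f : (forall x, 0 <= f x) -> measurable_fun [set: T] f ->
  \int[P]_x f x = \int[Q]_x ((g x)%:E * f x).
Proof.
case: hg => mg g0 hPQ f0 mf.
pose k : T -> {measure set T -> \bar R} := fun z => mscale (NngNum (g0 z)) (\d_ z).
have kE z U : k z U = (g z)%:E * (\1_U z)%:E.
  by rewrite /k /mscale /= /dirac.
have mk U : measurable U -> measurable_fun [set: T] (k ^~ U).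
  move=> mU; rewrite (_ : (k ^~ U) = (fun z => (g z)%:E * (\1_U z)%:E)).
    apply: emeasurable_funM; apply/measurable_EFinP => //.
  by apply/funext => z; rewrite kE.
have hnu U : measurable U -> P U = \int[Q]_z k z U.
  move=> mU; rewrite hPQ// integral_mkcond; apply: eq_integral => z _.
  transitivity ((g z)%:E * (\1_U z)%:E); last exact/esym/kE.
  rewrite /patch indicE.
  by case: (z \in U) => /=; rewrite ?mule1 ?mule0.
rewrite (@disint _ _ _ _ _ Q k P mk hnu f f0 mf).
apply: eq_integral => z _.
rewrite /k ge0_integral_mscale//= integral_dirac//= diracE in_setT mul1e.
by [].
Qed.

End change_density.

Section gibbs.
Context d (T : measurableType d) (R : realType).
Variables (P Q : {measure set T -> \bar R}) (g f : T -> R).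
Hypotheses (hg : is_density P Q g) (P1 : P setT = 1) (Qfin : Q setT \is a fin_num)
  (mf : measurable_fun setT f) (f0 : forall x, (0 <= f x)%R)
  (Pf0 : P (f @^-1` [set 0%R]) = 0).

Lemma gibbs :
  \int[P]_x (fun x => (ln (f x))%:E)^\+ x + 1 <=
  \int[P]_x (fun x => (ln (f x))%:E)^\- x + \int[P]_x (ln (g x))%:E +
  \int[Q]_x (f x)%:E.
Proof.
have [mg g0 hPQ] := hg.
set u := fun x => (ln (f x))%:E.
set v := fun x => (ln (g x))%:E.
have mu : measurable_fun setT u.
  by apply/measurable_EFinP; apply: measurableT_comp => //; exact: measurable_ln.
have mv : measurable_fun setT v.
  by apply/measurable_EFinP; apply: measurableT_comp => //; exact: measurable_ln.
pose h := fun x => (f x * expR (- ln (g x)))%R.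
have mh : measurable_fun setT h.
  apply: measurable_funM => //; apply: measurableT_comp; first exact: measurable_expR.
  apply: measurableT_comp; first exact: oppr_measurable.
  by apply: measurableT_comp => //; exact: measurable_ln.
have h0 x : (0 <= h x)%R by rewrite /h mulr_ge0// expR_ge0.
have mg0 : measurable (g @^-1` [set 0%R]).
  by rewrite -[X in measurable X]setTI; exact: mg.
have mf0 : measurable (f @^-1` [set 0%R]).
  by rewrite -[X in measurable X]setTI; exact: mf.
have Pg0 : P (g @^-1` [set 0%R]) = 0.
  by rewrite hPQ//; apply: integral0_eq => x /= ->.
have ae : {ae P, forall x, (0 < f x)%R /\ (0 < g x)%R}.
  have n1 : P.-negligible (f @^-1` [set 0%R]) by exists (f @^-1` [set 0%R]); split.
  have n2 : P.-negligible (g @^-1` [set 0%R]) by exists (g @^-1` [set 0%R]); split.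
  apply: negligibleS (negligibleU n1 n2) => x /= hx.
  case: (boolP (0 < f x)%R) => hf; last first.
    by left; apply/eqP; rewrite eq_le f0 andbT leNgt.
  right; apply/eqP; rewrite eq_le g0 andbT leNgt; apply/negP => hgx.
  exact: hx.
have mup : measurable_fun setT u^\+ by exact: measurable_funepos.
have mun : measurable_fun setT u^\- by exact: measurable_funeneg.
have mvp : measurable_fun setT v^\+ by exact: measurable_funepos.
have mvn : measurable_fun setT v^\- by exact: measurable_funeneg.
have mhE : measurable_fun setT (fun x => (h x)%:E) by exact/measurable_EFinP.
have mfE : measurable_fun setT (fun x => (f x)%:E) by exact/measurable_EFinP.
have E1 (r : R) : maxe r%:E 0 = (Num.max r 0)%:E by rewrite -EFin_max.
have key : \int[P]_x (u^\+ x + v^\- x + 1) <= \int[P]_x (u^\- x + v^\+ x + (h x)%:E).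
  apply: ae_ge0_le_integral => //.
  - by move=> x _; rewrite !adde_ge0.
  - by apply: emeasurable_funD => //; apply: emeasurable_funD.
  - by move=> x _; rewrite !adde_ge0// lee_fin.
  - by apply: emeasurable_funD => //; apply: emeasurable_funD.
  - apply: filterS ae => x [fp gp] _.
    rewrite !funeposE !funenegE /u /v -!EFinN !E1 -!EFinD lee_fin.
    exact: gibbs_pt.
have P1' : \int[P]_x (1 : \bar R) = 1.
  by rewrite (integral_cst P measurableT 1) mul1e P1.
have L : \int[P]_x (u^\+ x + v^\- x + 1) = \int[P]_x u^\+ x + \int[P]_x v^\- x + 1.
  rewrite ge0_integralD //; try (by move=> x _; rewrite ?adde_ge0 ?lee_fin);
    try (exact: emeasurable_funD).
  by rewrite ge0_integralD// P1'.
have Rr : \int[P]_x (u^\- x + v^\+ x + (h x)%:E) =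
    \int[P]_x u^\- x + \int[P]_x v^\+ x + \int[P]_x (h x)%:E.
  rewrite ge0_integralD //; try (by move=> x _; rewrite ?adde_ge0 ?lee_fin);
    try (exact: emeasurable_funD).
  by rewrite ge0_integralD.
have Hh : \int[P]_x (h x)%:E <= \int[Q]_x (f x)%:E.
  rewrite (change_density hg); last 2 first.
  - by move=> x; rewrite lee_fin.
  - exact: mhE.
  apply: ge0_le_integral => //.
  - by move=> x _; rewrite mule_ge0// lee_fin.
  - by apply: emeasurable_funM => //; exact/measurable_EFinP.
  - move=> x _; rewrite -EFinM lee_fin /h.
    have [->|gx] := eqVneq (g x) 0%R; first by rewrite mul0r.
    have gpos : (0 < g x)%R by rewrite lt_def gx g0.
    by rewrite expRN lnK ?posrE// mulrCA mulfV// mulr1.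
have Hv : \int[P]_x v^\- x <= Q setT.
  rewrite (change_density hg); last 2 first.
  - by move=> x; exact: funeneg_ge0.
  - exact: mvn.
  apply: (@le_trans _ _ (\int[Q]_x (1 : \bar R))); last first.
    by rewrite (integral_cst Q measurableT 1) mul1e.
  apply: ge0_le_integral => //.
  - by move=> x _; rewrite mule_ge0// ?lee_fin// funeneg_ge0.
  - by apply: emeasurable_funM => //; exact/measurable_EFinP.
  - move=> x _; rewrite funenegE /v -EFinN E1 -EFinM lee_fin.
    exact: neg_ln_bound.
have vfin : \int[P]_x v^\- x \is a fin_num.
  rewrite ge0_fin_numE; last by apply: integral_ge0 => x _; exact: funeneg_ge0.
  by case/fin_numPlt/andP: Qfin => _ Qlt; exact: le_lt_trans Hv Qlt.
rewrite (integralE _ _ v).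
have key' : \int[P]_x u^\+ x + \int[P]_x v^\- x + 1 <=
    \int[P]_x u^\- x + \int[P]_x v^\+ x + \int[Q]_x (f x)%:E.
  rewrite -L; apply: le_trans key _; rewrite Rr.
  exact: leeD.
rewrite addeA (addeAC _ (- _)) leeBrDr //.
rewrite (addeAC (\int[P]_x u^\+ x)).
apply: le_trans key' _.
by rewrite (addeAC (\int[P]_x u^\- x)) (addeAC (\int[P]_x u^\- x)).
Qed.
End gibbs.

Section KL_lemmas.
Context d (T : measurableType d) (R : realType).
Variables (P Q : {measure set T -> \bar R}).
Hypotheses (P1 : P setT = 1) (Q1 : Q setT = 1).

Lemma KL_bound (f : T -> R) : measurable_fun setT f -> (forall x, (0 <= f x)%R) ->
  P (f @^-1` [set 0%R]) = 0 ->
  \int[P]_x (fun x => (ln (f x))%:E)^\+ x + 1 <=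
  \int[P]_x (fun x => (ln (f x))%:E)^\- x + KL P Q + \int[Q]_x (f x)%:E.
Proof.
move=> mf f0 Pf0; rewrite /KL; case: pselect => [h|_].
  case: cid => g hg /=; apply: gibbs => //.
  by rewrite Q1.
have h1 : \int[P]_x (fun x => (ln (f x))%:E)^\- x != -oo.
  by rewrite gt_eqF// (lt_le_trans _ (integral_ge0 _ _))// => x _; exact: funeneg_ge0.
have h2 : \int[Q]_x (f x)%:E != -oo.
  by rewrite gt_eqF// (lt_le_trans _ (integral_ge0 _ _))// => x _; rewrite lee_fin.
by rewrite addey// addye// leey.
Qed.

Lemma KL_ge0 : 0 <= KL P Q.
Proof.
have := @KL_bound (fun _ => 1%R) (measurable_cst _) (fun _ => ler01) _.
rewrite preimage_cst /= ifF; last first.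
  by apply/negbTE/negP; rewrite inE /= => /eqP; rewrite oner_eq0.
move=> /(_ (measure0 _)).
have e1 : \int[P]_x (fun x : T => (ln (1 : R))%:E)^\+ x = 0.
  by apply: integral0_eq => x _; rewrite funeposE ln1 maxxx.
have e2 : \int[P]_x (fun x : T => (ln (1 : R))%:E)^\- x = 0.
  by apply: integral0_eq => x _; rewrite funenegE ln1 oppe0 maxxx.
rewrite e1 e2 (integral_cst Q measurableT 1%:E) mul1e Q1 !add0e.
by rewrite -{1}(add0e 1) leeD2rE.
Qed.

End KL_lemmas.

Section pushforward_facts.
Context d d' (T1 : measurableType d) (T2 : measurableType d') (R : realType).
Variables (m : {measure set T1 -> \bar R}) (f : T1 -> T2).
Hypothesis mf : measurable_fun [set: T1] f.

Lemma pf0 : pushforward m f set0 = 0.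
Proof. by rewrite /pushforward preimage_set0 measure0. Qed.

Lemma pf_ge0 A : 0 <= pushforward m f A.
Proof. exact: measure_ge0. Qed.

Lemma pf_sa : semi_sigma_additive (pushforward m f).
Proof.
move=> F mF tF mUF; rewrite /pushforward preimage_bigcup.
apply: measure_semi_sigma_additive.
- by move=> n; rewrite -[X in measurable X]setTI; exact: mf.
- apply/trivIsetP => /= i j _ _ ij; rewrite -preimage_setI.
  by move/trivIsetP : tF => /(_ _ _ _ _ ij) ->//; rewrite preimage_set0.
- by rewrite -preimage_bigcup -[X in measurable X]setTI; exact: mf.
Qed.

End pushforward_facts.
Arguments pf0 {d d' T1 T2 R} m f.
Arguments pf_ge0 {d d' T1 T2 R} m {f} mf.
Arguments pf_sa {d d' T1 T2 R} m {f} mf.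

Section instances.
Context (R : realType) (dX dY dZ : measure_display)
  (X : measurableType dX) (Y : measurableType dY) (Z : measurableType dZ)
  (P : probability ((X * Y) * Z)%type R) (K : R.-pker Z ~> (X * Y)%type).

Let PZ1 : PZ P setT = 1.
Proof. by rewrite /PZ /pushforward preimage_setT probability_setT. Qed.
Let PXY1 : PXY P setT = 1.
Proof. by rewrite /PXY /pushforward preimage_setT probability_setT. Qed.
Let PX1 z : PX_Z K z setT = 1.
Proof. by rewrite /PX_Z /pushforward preimage_setT prob_kernel. Qed.
Let PY1 z : PY_Z K z setT = 1.
Proof. by rewrite /PY_Z /pushforward preimage_setT prob_kernel. Qed.
HB.instance Definition _ := isMeasure.Build _ _ _ (PZ P)
  (pf0 P snd) (pf_ge0 P (@measurable_snd _ _ _ _)) (pf_sa P (@measurable_snd _ _ _ _)).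
HB.instance Definition _ := Measure_isProbability.Build _ _ _ (PZ P)
  PZ1.
HB.instance Definition _ := isMeasure.Build _ _ _ (PXY P)
  (pf0 P fst) (pf_ge0 P (@measurable_fst _ _ _ _)) (pf_sa P (@measurable_fst _ _ _ _)).
HB.instance Definition _ := Measure_isProbability.Build _ _ _ (PXY P)
  PXY1.
HB.instance Definition _ z := isMeasure.Build _ _ _ (PX_Z K z)
  (pf0 (K z) fst) (pf_ge0 (K z) (@measurable_fst _ _ _ _)) (pf_sa (K z) (@measurable_fst _ _ _ _)).
HB.instance Definition _ z := Measure_isProbability.Build _ _ _ (PX_Z K z)
  (PX1 z).
HB.instance Definition _ z := isMeasure.Build _ _ _ (PY_Z K z)
  (pf0 (K z) snd) (pf_ge0 (K z) (@measurable_snd _ _ _ _)) (pf_sa (K z) (@measurable_snd _ _ _ _)).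
HB.instance Definition _ z := Measure_isProbability.Build _ _ _ (PY_Z K z)
  (PY1 z).

Definition kX : Z -> {measure set X -> \bar R} := fun z => PX_Z K z.
Definition kY2 : (Z * X)%type -> {measure set Y -> \bar R} := fun p => PY_Z K p.1.

Let mkX U : measurable U -> measurable_fun [set: Z] (kX ^~ U).
Proof.
move=> mU; rewrite /kX /PX_Z /pushforward.
apply: measurable_kernel; rewrite -[X in measurable X]setTI.
exact: measurable_fst.
Qed.

Let mkY2 U : measurable U -> measurable_fun [set: Z * X] (kY2 ^~ U).
Proof.
move=> mU; rewrite /kY2 /PY_Z /pushforward.
apply: (measurableT_comp (f := fun z => K z (snd @^-1` U))) => //.
apply: measurable_kernel; rewrite -[X in measurable X]setTI.
exact: measurable_snd.
Qed.

HB.instance Definition _ := isKernel.Build _ _ _ _ _ kX mkX.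
HB.instance Definition _ := Kernel_isProbability.Build _ _ _ _ _ kX PX1.
HB.instance Definition _ := isKernel.Build _ _ _ _ _ kY2 mkY2.
HB.instance Definition _ := Kernel_isProbability.Build _ _ _ _ _ kY2 (fun p => PY1 p.1).

Lemma measurable_Q A : measurable A ->
  measurable_fun [set: Z] (fun z => (PX_Z K z \x PY_Z K z) A).
Proof.
move=> mA.
have := measurable_kproduct kX kY2 mA.
congr measurable_fun; apply/funext => z.
rewrite /kproduct /product_measure1; apply: eq_integral => x _.
by rewrite mathcomp.analysis.kernel.intker_indicE.
Qed.

Let Q1 z : (PX_Z K z \x PY_Z K z) setT = 1.
Proof.
rewrite -setXTT product_measure1E//.
transitivity (1 * 1 : \bar R); last by rewrite mule1.
by congr (_ * _); [exact: PX1 z|exact: PY1 z].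
Qed.

Let M0 : mixture P K set0 = 0.
Proof. by rewrite /mixture; apply: integral0_eq => z _; rewrite measure0. Qed.

Let M_ge0 A : 0 <= mixture P K A.
Proof. by apply: integral_ge0 => z _. Qed.

Let M_sa : semi_sigma_additive (mixture P K).
Proof.
move=> F mF tF mUF.
rewrite [X in _ --> X](_ : _ = \sum_(n <oo) mixture P K (F n)).
  by apply/cvg_closeP; split; [exact: is_cvg_nneseries|rewrite closeE].
rewrite /mixture -integral_nneseries//; last by move=> n; exact: measurable_Q.
apply: eq_integral => z _; apply/esym/cvg_lim => //=.
exact: measure_semi_sigma_additive.
Qed.

HB.instance Definition _ := isMeasure.Build _ _ _ (mixture P K) M0 M_ge0 M_sa.

Let M1 : mixture P K setT = 1.
Proof.
rewrite /mixture (eq_integral (fun _ => 1)); last by move=> z _; exact: Q1.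
by rewrite (integral_cst (PZ P) measurableT 1) mul1e; exact: PZ1.
Qed.

HB.instance Definition _ := Measure_isProbability.Build _ _ _ (mixture P K) M1.

Definition Qm : Z -> {measure set (X * Y)%type -> \bar R} :=
  fun z => PX_Z K z \x PY_Z K z.

Lemma main (hK : is_cond_distr P K)
  (hmeas : measurable_fun [set: Z] (cond_KL K)) : weak_MI P K <= cond_MI P K.
Proof.
have hPxy B : measurable B -> PXY P B = \int[PZ P]_z K z B.
  move=> mB; rewrite /PXY /pushforward hK; last first.
    by rewrite -[X in measurable X]setTI; exact: measurable_fst.
  by apply: eq_integral => z _; rewrite ysection_preimage_fst.
have disP (phi : X * Y -> \bar R) : (forall x, 0 <= phi x) -> measurable_fun setT phi ->
    \int[PXY P]_x phi x = \int[PZ P]_z \int[K z]_x phi x.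
  move=> phi0 mphi.
  exact: (@disint _ _ _ _ _ (PZ P) K (PXY P) (measurable_kernel K) hPxy phi phi0 mphi).
have disM (phi : X * Y -> \bar R) : (forall x, 0 <= phi x) -> measurable_fun setT phi ->
    \int[mixture P K]_x phi x = \int[PZ P]_z \int[Qm z]_x phi x.
  move=> phi0 mphi.
  exact: (@disint _ _ _ _ _ (PZ P) Qm (mixture P K) measurable_Q (fun U _ => erefl) phi phi0 mphi).
have KLge0 z : 0 <= cond_KL K z.
  rewrite /cond_KL; apply: (@KL_ge0 _ _ _ (K z) (Qm z)); [exact: prob_kernel|exact: Q1].
rewrite /weak_MI /KL; case: pselect => [h|nh].
  case: cid => f [mf f0 hf] /=.
  set u := fun x => (ln (f x))%:E.
  have mu_ : measurable_fun setT u.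
    by apply/measurable_EFinP; apply: measurableT_comp => //; exact: measurable_ln.
  have mS : measurable (f @^-1` [set 0%R]).
    by rewrite -[X in measurable X]setTI; exact: mf.
  have Pf0 : PXY P (f @^-1` [set 0%R]) = 0.
    by rewrite hf//; apply: integral0_eq => x /= ->.
  have aeK : {ae PZ P, forall z, K z (f @^-1` [set 0%R]) = 0}.
    have : \int[PZ P]_z `|K z (f @^-1` [set 0%R])| = 0.
      rewrite -Pf0 hPxy//; apply: eq_integral => z _; rewrite gee0_abs//.
    move/ae_eq_integral_abs => /(_ measurableT (measurable_kernel K _ mS)).
    by apply: filterS => z /(_ I).
  have ineq : {ae PZ P, forall z, \int[K z]_x u^\+ x + 1 <=
      \int[K z]_x u^\- x + cond_KL K z + \int[Qm z]_x (f x)%:E}.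
    apply: filterS aeK => z Kz0.
    rewrite /cond_KL; apply: (@KL_bound _ _ _ (K z) (Qm z)) => //; [exact: prob_kernel|exact: Q1].
  have mKp : measurable_fun setT (fun z => \int[K z]_x u^\+ x).
    apply: measurable_fun_integral_kernel; first exact: measurable_kernel.
    - by move=> x; exact: funepos_ge0.
    - exact: measurable_funepos.
  have mKn : measurable_fun setT (fun z => \int[K z]_x u^\- x).
    apply: measurable_fun_integral_kernel; first exact: measurable_kernel.
    - by move=> x; exact: funeneg_ge0.
    - exact: measurable_funeneg.
  have mQf : measurable_fun setT (fun z => \int[Qm z]_x (f x)%:E).
    apply: measurable_fun_integral_kernel; first exact: measurable_Q.
    - by move=> x; rewrite lee_fin.
    - exact/measurable_EFinP.
  have I : \int[PZ P]_z (\int[K z]_x u^\+ x + 1) <=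
      \int[PZ P]_z (\int[K z]_x u^\- x + cond_KL K z + \int[Qm z]_x (f x)%:E).
    apply: ae_ge0_le_integral => //.
    - move=> z _; apply: adde_ge0 => //.
      by apply: integral_ge0 => x _; exact: funepos_ge0.
    - exact: emeasurable_funD.
    - move=> z _; apply: adde_ge0; first apply: adde_ge0 => //.
        by apply: integral_ge0 => x _; exact: funeneg_ge0.
      by apply: integral_ge0 => x _; rewrite lee_fin.
    - by apply: emeasurable_funD => //; exact: emeasurable_funD.
    - by apply: filterS ineq => z + _.
  have PZint1 : \int[PZ P]_z (1 : \bar R) = 1.
    by rewrite (integral_cst (PZ P) measurableT 1) mul1e; exact: PZ1.
  have L1 : \int[PZ P]_z (\int[K z]_x u^\+ x + 1) = \int[PXY P]_x u^\+ x + 1.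
    rewrite ge0_integralD//; try (by move=> z _; apply: integral_ge0 => x _;
      rewrite ?funepos_ge0 ?funeneg_ge0 ?lee_fin).
    rewrite -disP//; last exact: measurable_funepos.
    congr (_ + _); exact: PZint1.
  have R1 : \int[PZ P]_z (\int[K z]_x u^\- x + cond_KL K z + \int[Qm z]_x (f x)%:E) =
      \int[PXY P]_x u^\- x + cond_MI P K + 1.
    rewrite ge0_integralD//; try (by move=> z _; apply: integral_ge0 => x _;
      rewrite ?funepos_ge0 ?funeneg_ge0 ?lee_fin); last 2 first.
    - move=> z _; apply: adde_ge0 => //.
      by apply: integral_ge0 => x _; exact: funeneg_ge0.
    - exact: emeasurable_funD.
    rewrite ge0_integralD//; try (by move=> z _; apply: integral_ge0 => x _;
      rewrite ?funepos_ge0 ?funeneg_ge0 ?lee_fin).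
    rewrite -disP//; last exact: measurable_funeneg.
    rewrite -disM//; last exact/measurable_EFinP.
    congr (_ + _ + _); rewrite -hf//; exact: PXY1.
  rewrite L1 R1 leeD2rE// in I.
  rewrite integralE.
  have un0 : 0 <= \int[PXY P]_x u^\- x.
    by apply: integral_ge0 => x _; exact: funeneg_ge0.
  have [unfin|] := boolP (\int[PXY P]_x u^\- x \is a fin_num).
    by rewrite leeBlDl.
  rewrite ge0_fin_numE// -leNgt leye_eq => /eqP ->.
  by rewrite addeNy leNye.
have [->//|hne] := eqVneq (cond_MI P K) +oo.
exfalso; apply: nh.
pose S := cond_KL K @^-1` [set +oo].
have mS : measurable S.
  by rewrite -[X in measurable X]setTI; apply: hmeas => //; exact: emeasurable_set1.
have S0 : PZ P S = 0.
  apply/eqP; apply: contraNT hne => Sne.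
  have Spos : 0 < PZ P S by rewrite lt0e Sne measure_ge0.
  rewrite eq_le leey /=.
  apply: le_trans (_ : \int[PZ P]_(z in S) cond_KL K z <= _); last first.
    exact: ge0_subset_integral.
  rewrite (eq_integral (fun _ => +oo)); last by move=> z; rewrite inE.
  by rewrite integral_cst// gt0_mulye.
have helper A : measurable A -> mixture P K A = 0 -> PXY P A = 0.
  move=> mA MA0.
  have aeQ : {ae PZ P, forall z, Qm z A = 0}.
    have : \int[PZ P]_z `|Qm z A| = 0.
      by rewrite -MA0 /mixture; apply: eq_integral => z _; rewrite gee0_abs.
    move/ae_eq_integral_abs => /(_ measurableT (measurable_Q mA)).
    by apply: filterS => z /(_ I).
  have aeS : {ae PZ P, forall z, cond_KL K z != +oo}.
    exists S; split => // z /= hz.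
    by move: hz => /negP; rewrite negbK => /eqP.
  have aeK : {ae PZ P, forall z, K z A = 0}.
    apply: filterS2 aeQ aeS => z hQ.
    rewrite /cond_KL /KL; case: pselect => [[g [mg g0 hg]] _|]; last by rewrite eqxx.
    rewrite hg//; apply: null_set_integral => //.
    by apply/measurable_EFinP; exact: measurable_funTS.
  rewrite hPxy// (ae_eq_integral (cst 0)) //.
  - by rewrite integral0.
  - exact: measurable_kernel.
  - by apply: filterS aeK => z h _.
have dom : PXY P `<< mixture P K.
  by move=> N hN B mB BN; apply: helper mB (hN B mB BN).
have [g [g0 gfin gint gE]] :=
  @radon_nikodym_sigma_finite _ _ R (mixture P K) (PXY P) dom.
exists (fun x => fine (g x)); split.
- apply: measurableT_comp; first exact: fine_measurable.
  exact: measurable_int gint.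
- by move=> x; exact: fine_ge0.
- move=> A mA; rewrite gE//; apply: eq_integral => x _.
  by rewrite fineK.
Qed.

End instances.

Unset Implicit Arguments. Set Strict Implicit.

Theorem propositionA6 (R : realType) (dX dY dZ : measure_display)
  (X : measurableType dX) (Y : measurableType dY) (Z : measurableType dZ)
  (P : probability ((X * Y) * Z)%type R) (K : R.-pker Z ~> (X * Y)%type)
  (hK : is_cond_distr P K)
  (hmeas : measurable_fun [set: Z] (cond_KL K)) :
  weak_MI P K <= cond_MI P K.
Proof.
exact: main hK hmeas.
Qed.
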